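(* Let $n,m\ge 1$, let $\vec k=(k_1,\dots,k_m)$ be a vector of positive integer capacities with $k_1+\dots+k_m<n$, let $\vec x\in[0,1]^n$ and $\vec y\in[0,1]^m$. Then the First-Come-First-Served game associated with $\vec x$, $\vec y$ and $\vec k$ admits at least one pure Nash Equilibrium.
   Context: There are $n$ agents with positions $\vec x=(x_1,\dots,x_n)\in[0,1]^n$ and $m$ facilities with capacities $k_1,\dots,k_m$; $\vec y=(y_1,\dots,y_m)$ is a facility location, $y_j$ being the position of the facility of capacity $k_j$. A fixed total priority order on the agents is used to break ties. The First-Come-First-Served (FCFS) game induced by $(\vec x,\vec y)$: each agent $i$ chooses a pure strategy $s_i\in\{1,\dots,m\}$; for a profile $\vec s$, let $\mathcal S_j$ be the set of agents choosing $j$, and let $T_j\subseteq\mathcal S_j$ consist of the $\min(k_j,|\mathcal S_j|)$ agents of $\mathcal S_j$ with the smallest distances $|x_i-y_j|$ (ties broken by the priority order). The utility of agent $i$ is $u_i(\vec x,\vec y;\vec s)=1-|x_i-y_j|$ if $i\in T_j$ for some $j$, and $0$ otherwise. A pure Nash Equilibrium is a profile from which no agent can strictly increase its utility by unilaterally changing its strategy. *)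

(* Defs.v *)
From mathcomp Require Import all_boot all_order all_algebra.
Set Implicit Arguments. Unset Strict Implicit. Unset Printing Implicit Defensive.
Import Order.TTheory GRing.Theory Num.Theory.
Local Open Scope ring_scope.

(* Agents are 'I_n, facilities are 'I_m.  x i = position of agent i,
   y j = position of facility j (capacity k j).  The fixed total priority
   order on agents is given by an injective rank [prio : 'I_n -> nat]:
   agent a has priority over agent b iff prio a < prio b. *)

Section FCFS.
Variables (R : realFieldType) (n m : nat).
Variables (x : 'I_n -> R) (y : 'I_m -> R) (k : 'I_m -> nat) (prio : 'I_n -> nat).

Definition dist (i : 'I_n) (j : 'I_m) : R := `|x i - y j|.

(* a precedes b at facility j: strictly closer, or equally close with
   higher priority (the lexicographic order used to select T_j). *)
Definition precedes (j : 'I_m) (a b : 'I_n) : bool :=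
  (dist a j < dist b j) || ((dist a j == dist b j) && (prio a < prio b)%N).

(* i belongs to T_j for j = s i: i is among the k_j first agents of S_j
   in the order [precedes j] (equivalently among the min(k_j,|S_j|) first). *)
Definition served (s : 'I_n -> 'I_m) (i : 'I_n) : bool :=
  (#|[set a | (s a == s i) && precedes (s i) a i]| < k (s i))%N.

Definition utility (s : 'I_n -> 'I_m) (i : 'I_n) : R :=
  if served s i then 1 - dist i (s i) else 0.

Definition deviate (s : 'I_n -> 'I_m) (i : 'I_n) (j : 'I_m) : 'I_n -> 'I_m :=
  fun a => if a == i then j else s a.

Definition pure_NE (s : 'I_n -> 'I_m) : Prop :=
  forall (i : 'I_n) (j : 'I_m), utility (deviate s i j) i <= utility s i.

End FCFS.

(* Main.v *)
Require Import Defs.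
From mathcomp Require Import all_boot all_order all_algebra.
From mathcomp Require Import lra.
Import Order.TTheory GRing.Theory Num.Theory.
Set Implicit Arguments. Unset Strict Implicit. Unset Printing Implicit Defensive.
Local Open Scope ring_scope.

Lemma min_ex (T : finType) (r : rel T) : irreflexive r -> transitive r ->
  forall A : {set T}, A != set0 -> exists2 p, p \in A & forall q, q \in A -> ~~ r q p.
Proof.
move=> irr tr A; move: {2}#|A| (leqnn #|A|) => N; elim: N A => [|N IH] A hN hA.
  by move: hA; rewrite -card_gt0; case: #|A| hN.
case/set0Pn: hA => z zA.
case: (boolP [exists q, (q \in A) && r q z]) => [/existsP[q /andP[qA rqz]]|].
  set A' := [set w in A | r w z].
  have zA' : z \notin A' by rewrite inE irr andbF.
  have sub : A' \proper A by apply/properP; split; [apply/subsetP => w; rewrite inE => /andP[] | exists z].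
  have hA' : A' != set0 by apply/set0Pn; exists q; rewrite inE qA rqz.
  have hN' : (#|A'| <= N)%N by rewrite -ltnS; exact: leq_trans (proper_card sub) hN.
  case: (IH A' hN' hA') => p pA' hp.
  move: (pA'); rewrite inE => /andP[pA rpz].
  exists p => // w wA; apply/negP => rwp.
  by move: (hp w); rewrite inE wA (tr _ _ _ rwp rpz) /= => /(_ isT); rewrite rwp.
rewrite negb_exists => /forallP h.
by exists z => // q qA; move: (h q); rewrite qA.
Qed.
Section Main.
Variables (R : realFieldType) (n m : nat) (x : 'I_n -> R) (y : 'I_m -> R)
  (k : 'I_m -> nat) (prio : 'I_n -> nat).
Hypothesis prio_inj : injective prio.
Local Notation d := (dist x y).
Local Notation prec := (precedes x y prio).

Lemma prec_irr j a : ~~ prec j a a.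
Proof. by rewrite /precedes ltxx ltnn andbF. Qed.

Lemma prec_asym j a b : prec j a b -> ~~ prec j b a.
Proof.
rewrite /precedes => /orP[h|/andP[/eqP e h]].
  apply/negP => /orP[h'|/andP[/eqP e' _]].
    by have := lt_trans h h'; rewrite ltxx.
  by move: h; rewrite e' ltxx.
by rewrite e ltxx eqxx /= -leqNgt ltnW.
Qed.

Lemma prec_total j a b : a != b -> prec j a b || prec j b a.
Proof.
move=> ab; rewrite /precedes.
case: (ltgtP (d a j) (d b j)) => //= _.
rewrite -neq_ltn; apply: contra ab => /eqP /prio_inj ->; by [].
Qed.

Definition ltp (p q : 'I_n * 'I_m) :=
  (d p.1 p.2 < d q.1 q.2) || ((d p.1 p.2 == d q.1 q.2) && (prio p.1 < prio q.1)%N).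

Lemma ltp_irr : irreflexive ltp.
Proof. by move=> p; rewrite /ltp ltxx ltnn andbF. Qed.

Lemma ltp_tr : transitive ltp.
Proof.
move=> q p r; rewrite /ltp.
move=> /orP[h1|/andP[/eqP e1 h1]] /orP[h2|/andP[/eqP e2 h2]]; apply/orP.
- by left; exact: lt_trans h1 h2.
- by left; rewrite -e2.
- by left; rewrite e1.
- by right; rewrite e1 e2 eqxx /=; exact: ltn_trans h1 h2.
Qed.

Definition cnt (M : 'I_n -> option 'I_m) j := #|[set a | M a == Some j]|.
Definition avail M (p : 'I_n * 'I_m) := (M p.1 == None) && (cnt M p.2 < k p.2)%N.
Definition upd (M : 'I_n -> option 'I_m) c jc := fun a => if a == c then Some jc else M a.

Lemma cnt_upd M c jc j : M c = None -> cnt (upd M c jc) j = (cnt M j + (j == jc))%N.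
Proof.
move=> hc; rewrite /cnt; case: eqP => [->|ne].
  have -> : [set a | upd M c jc a == Some jc] = c |: [set a | M a == Some jc].
    apply/setP => a; rewrite !inE /upd; case: (a =P c) => [->|_] //=; by rewrite !eqxx.
  by rewrite cardsU1 inE hc /= addnC.
have -> : [set a | upd M c jc a == Some j] = [set a | M a == Some j].
  apply/setP => a; rewrite !inE /upd; case: (a =P c) => [->|_] //; rewrite hc /=.
  by case: eqP => // -[h]; case: ne.
by rewrite addn0.
Qed.

Definition Inv (M : 'I_n -> option 'I_m) :=
  [/\ forall j, (cnt M j <= k j)%N,
      forall a j i, M a = Some j -> M i = None -> prec j a i,
      forall a j j', M a = Some j -> d a j' < d a j -> (k j' <= cnt M j')%N &
      forall a j b j', M a = Some j -> M b = Some j' -> d a j' < d a j -> prec j' b a].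

Lemma Inv0 : Inv (fun _ => None).
Proof.
rewrite /Inv; split => //.
move=> j; rewrite /cnt.
rewrite (_ : [set a : 'I_n | None == Some j] = set0) ?cards0 //; apply/setP => a; by rewrite !inE.
Qed.

Lemma Inv_step M c jc : Inv M -> avail M (c, jc) ->
  (forall p, avail M p -> ~~ ltp p (c, jc)) -> Inv (upd M c jc).
Proof.
rewrite /Inv; move=> [hK hB hC hD] /andP[/= /eqP hc hcnt] hmin.
have cntle j : (cnt M j <= cnt (upd M c jc) j)%N by rewrite cnt_upd // leq_addr.
rewrite /Inv; split.
- move=> j; rewrite cnt_upd //; case: (j =P jc) => [->|_]; first by rewrite addn1.
  by rewrite addn0.
- move=> a j i; rewrite /upd; case: (a =P c) => [-> [<-]|_ ha]; case: (i =P c) => // /eqP ic hi.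
    have := hmin (i, jc); rewrite /avail /= hi eqxx hcnt => /(_ isT) hn.
    have hn' : ~~ prec jc i c := hn.
    by have := prec_total jc ic; rewrite (negbTE hn').
  exact: hB hi.
- move=> a j j'; rewrite /upd; case: (a =P c) => [-> [<-]|_ ha] hlt.
    case: (leqP (k j') (cnt M j')) => [h|h]; first exact: leq_trans h (cntle j').
    have := hmin (c, j'); rewrite /avail /= hc eqxx h => /(_ isT).
    by rewrite /ltp /= hlt.
  exact: leq_trans (hC _ _ _ ha hlt) (cntle j').
- move=> a j b j'; rewrite /upd.
  case: (a =P c) => [-> [<-]|_ ha]; case: (b =P c) => [-> [<-]|_ hb] hlt.
  + by move: hlt; rewrite ltxx.
  + exact: hB hb hc.
  + by have := hC _ _ _ ha hlt; rewrite leqNgt hcnt.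
  + exact: hD ha hb hlt.
Qed.

Lemma build t : exists M, Inv M /\
  ((t <= #|[set a | M a != None]|)%N \/ forall p, ~~ avail M p).
Proof.
elim: t => [|t [M [hI hP]]].
  by exists (fun _ => None); split; [exact: Inv0 | left].
case: (boolP [exists p, avail M p]) => [hex|]; last first.
  by rewrite negb_exists => /forallP h; exists M; split => //; right.
have : [set p | avail M p] != set0.
  by case/existsP: hex => p hp; apply/set0Pn; exists p; rewrite inE.
case/(min_ex ltp_irr ltp_tr) => [[c jc]]; rewrite inE => hav hmin.
exists (upd M c jc); split.
  by apply: Inv_step => // p hp; apply: hmin; rewrite inE.
case: hP => [ht|hna]; last by move: (hna (c, jc)); rewrite hav.
left.
have -> : [set a | upd M c jc a != None] = c |: [set a | M a != None].
  by apply/setP => a; rewrite !inE /upd; case: (a =P c) => [->|_]; rewrite ?eqxx.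
rewrite cardsU1 inE; move: hav => /andP[/= /eqP -> _] /=.
by rewrite add1n ltnS.
Qed.

Definition sof (M : 'I_n -> option 'I_m) (j0 : 'I_m) :=
  fun i => if M i is Some j then j else j0.

Lemma served_match M j0 a j : Inv M -> M a = Some j -> served x y k prio (sof M j0) a.
Proof.
rewrite /Inv => -[hK hB hC hD] ha.
have sa : sof M j0 a = j by rewrite /sof ha.
rewrite /served sa.
apply: leq_trans (proper_card _) (hK j).
apply/properP; split.
  apply/subsetP => b; rewrite !inE /sof.
  case hb: (M b) => [j''|] /=; first by move=> /andP[/eqP -> _].
  move=> /andP[_ hp]; by have := prec_asym hp; rewrite (hB _ _ _ ha hb).
by exists a; rewrite !inE ?ha ?eqxx // (negbTE (prec_irr _ _)) andbF.
Qed.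

Lemma notserved M (s' : 'I_n -> 'I_m) i j' : (k j' <= cnt M j')%N -> s' i = j' ->
  (forall b, M b = Some j' -> s' b = j' /\ prec j' b i) -> ~~ served x y k prio s' i.
Proof.
move=> hfull hs h; rewrite /served hs -leqNgt.
apply: leq_trans hfull (subset_leq_card _).
apply/subsetP => b; rewrite !inE => /eqP hb; have [-> hp] := h b hb.
by rewrite eqxx hp.
Qed.

Lemma final_NE (hm : (0 < m)%N) : (forall i, 0 <= x i <= 1) -> (forall j, 0 <= y j <= 1) ->
  exists s, pure_NE x y k prio s.
Proof.
move=> hx hy.
have dle i j : d i j <= 1.
  rewrite /dist ler_norml; move: (hx i) (hy j) => /andP[? ?] /andP[? ?].
  apply/andP; split; lra.
have [M [hI hP]] := build n.
have hna : forall p, ~~ avail M p.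
  case: hP => [hn|//] p.
  have : [set a | M a != None] = setT.
    by apply/eqP; rewrite eqEcard subsetT cardsT card_ord.
  move/setP => /(_ p.1); rewrite !inE /avail => e.
  by apply/negP => /andP[/eqP h _]; rewrite h in e.
set j0 : 'I_m := Ordinal hm.
exists (sof M j0) => i j'.
move: (hI); rewrite /Inv => -[hK hB hC hD].
set s := sof M j0.
have hsi : deviate s i j' i = j' by rewrite /deviate eqxx.
rewrite /utility hsi.
case hi: (M i) => [j|].
  have sij : s i = j by rewrite /s /sof hi.
  rewrite (served_match j0 hI hi) sij.
  case: ifP => hsv; last by have := dle i j; lra.
  rewrite lerD2l lerN2 leNgt; apply/negP => hlt.
  suff : ~~ served x y k prio (deviate s i j') i by rewrite hsv.
  apply: (@notserved M (deviate s i j') i j' (hC _ _ _ hi hlt) hsi) => b hb.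
  have bi : b != i.
    by apply/eqP => e; move: hb; rewrite e hi => -[e']; move: hlt; rewrite e' ltxx.
  split; last exact: hD hi hb hlt.
  by rewrite /deviate (negbTE bi) /s /sof hb.
have full j'' : (k j'' <= cnt M j'')%N.
  by move: (hna (i, j'')); rewrite /avail /= hi eqxx /= -leqNgt.
have sij : s i = j0 by rewrite /s /sof hi.
rewrite (negbTE (@notserved M s i (s i) _ erefl _)); first last.
- move=> b; rewrite sij => hb; split; [by rewrite /s /sof hb | exact: hB hb hi].
- exact: full.
rewrite (negbTE (@notserved M (deviate s i j') i j' (full j') hsi _)) //.
move=> b hb; have bi : b != i by apply/eqP => e; move: hb; rewrite e hi.
split; last exact: hB hb hi.
by rewrite /deviate (negbTE bi) /s /sof hb.
Qed.

End Main.

Theorem theorem1 (R : realFieldType) (n m : nat)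
  (x : 'I_n -> R) (y : 'I_m -> R) (k : 'I_m -> nat) (prio : 'I_n -> nat) :
  (1 <= n)%N -> (1 <= m)%N ->
  (forall j, (0 < k j)%N) ->
  (\sum_(j < m) k j < n)%N ->
  (forall i, 0 <= x i <= 1) ->
  (forall j, 0 <= y j <= 1) ->
  injective prio ->
  exists s : 'I_n -> 'I_m, pure_NE x y k prio s.
Proof.
move=> _ hm _ _ hx hy hinj.
exact: (final_NE k hinj hm hx hy).
Qed.
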